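(* Let $\operatorname{R}_3=\{a_0,a_1,a_2\}$ be the dihedral quandle of order $3$, with $a_ia_j=a_{2j-i \pmod 3}$. Then $\operatorname{Aut}(\mathbb{Z}[\operatorname{R}_3])\cong\Sigma_3\cong\operatorname{Aut}(\operatorname{R}_3)$.
   Context: For a quandle $Q$, the quandle ring $\mathbb{Z}[Q]$ is the free abelian group with basis $Q$, with multiplication $\big(\sum_i\alpha_i q_i\big)\big(\sum_j\beta_j q_j\big)=\sum_{i,j}\alpha_i\beta_j (q_iq_j)$. $\operatorname{Aut}(\mathbb{Z}[Q])$ denotes the group of ring automorphisms of $\mathbb{Z}[Q]$, $\operatorname{Aut}(Q)$ the group of quandle automorphisms of $Q$, and $\Sigma_3$ the symmetric group on three letters. *)

(* Defs.v *)
From HB Require Import structures.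
From mathcomp Require Import all_boot all_order all_algebra all_fingroup.
Set Implicit Arguments. Unset Strict Implicit. Unset Printing Implicit Defensive.
Import GRing.Theory.
Local Open Scope ring_scope.

Definition r3op (i j : 'I_3) : 'I_3 := inord ((2 * j + 3 - i) %% 3)%N.

Definition quandle_aut (T : finType) (op : T -> T -> T) : {set {perm T}} :=
  [set s : {perm T} | [forall i, forall j, s (op i j) == op (s i) (s j)]].

(* The quandle ring Z[Q]: free abelian group on Q, elements are finitely
   supported (here: all, Q finite) functions Q -> int. *)
Definition qring (T : finType) := {ffun T -> int}.

(* Multiplication (sum_i x_i q_i)(sum_j y_j q_j) = sum_{i,j} x_i y_j (q_i q_j). *)
Definition qring_mul (T : finType) (op : T -> T -> T) (x y : qring T) : qring T :=
  [ffun k => \sum_(i : T) \sum_(j : T) (if op i j == k then x i * y j else 0)].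

Definition qring_aut (T : finType) (op : T -> T -> T) (f : qring T -> qring T) : Prop :=
  [/\ bijective f,
      forall x y, f (x + y) = f x + f y &
      forall x y, f (qring_mul op x y) = qring_mul op (f x) (f y)].

(* Main.v *)
Require Import Defs.
From HB Require Import structures.
From mathcomp Require Import all_boot all_order all_algebra all_fingroup.
From mathcomp Require Import zify ring lra.
Import GRing.Theory.
Local Open Scope ring_scope.

Ltac ordcase i := case: i => [[|[|[|?]]] ?] //.

Lemma r3opE i j : nat_of_ord (r3op i j) = ((2 * j + 3 - i) %% 3)%N.
Proof. by rewrite /r3op inordK // ltn_pmod. Qed.

Lemma opb (i j : 'I_3) :
  if i == j then r3op i j == i else (r3op i j != i) && (r3op i j != j).
Proof. ordcase i; ordcase j; rewrite -!(inj_eq val_inj) /= r3opE //. Qed.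

Lemma thirdb (x y z w : 'I_3) :
   [&& x != y, z != x, z != y, w != x & w != y] -> (z = w).
Proof. ordcase x; ordcase y; ordcase z; ordcase w; move=> _; exact/val_inj. Qed.

Lemma perm_aut (s : {perm 'I_3}) i j : s (r3op i j) = r3op (s i) (s j).
Proof.
have := opb i j; case: eqP => [-> /eqP -> | /eqP nij /andP[n1 n2]].
  by have := opb (s j) (s j); rewrite eqxx => /eqP ->.
have nsij : s i != s j by rewrite (inj_eq perm_inj).
have := opb (s i) (s j); rewrite (negbTE nsij) => /andP[m1 m2].
apply: (@thirdb (s i) (s j)).
by rewrite nsij !(inj_eq perm_inj) n1 n2 m1 m2.
Qed.

Definition o0 : 'I_3 := @Ordinal 3 0 isT.
Definition o1 : 'I_3 := @Ordinal 3 1 isT.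
Definition o2 : 'I_3 := @Ordinal 3 2 isT.

Lemma sum3 (F : 'I_3 -> int) : \sum_i F i = F o0 + F o1 + F o2.
Proof.
rewrite !big_ord_recl big_ord0 addr0 addrA.
congr (F _ + F _ + F _); exact/val_inj.
Qed.

Lemma idem_eqs (v : qring 'I_3) : qring_mul r3op v v = v ->
  [/\ v o0 * v o0 + 2 * (v o1 * v o2) = v o0,
      v o1 * v o1 + 2 * (v o0 * v o2) = v o1 &
      v o2 * v o2 + 2 * (v o0 * v o1) = v o2].
Proof.
move=> H; split.
- move/(congr1 (fun w : qring 'I_3 => w o0)): H; rewrite ffunE !sum3.
  rewrite -!(inj_eq val_inj) /= !r3opE /= => H.
  rewrite -[in RHS]H; ring.
- move/(congr1 (fun w : qring 'I_3 => w o1)): H; rewrite ffunE !sum3.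
  rewrite -!(inj_eq val_inj) /= !r3opE /= => H.
  rewrite -[in RHS]H; ring.
- move/(congr1 (fun w : qring 'I_3 => w o2)): H; rewrite ffunE !sum3.
  rewrite -!(inj_eq val_inj) /= !r3opE /= => H.
  rewrite -[in RHS]H; ring.
Qed.

Lemma int_sys (a b c : int) : a*a + 2*(b*c) = a -> b*b+2*(a*c) = b ->
  c*c + 2*(a*b) = c ->
 [\/ [/\ a = 0, b = 0 & c = 0], [/\ a = 1, b = 0 & c = 0],
     [/\ a = 0, b = 1 & c = 0] | [/\ a = 0, b = 0 & c = 1]].
Proof.
move=> H1 H2 H3.
have H12 : (a-b)*(a+b-2*c-1) = 0 by nia.
have H23 : (b-c)*(b+c-2*a-1) = 0 by nia.
have H13 : (a-c)*(a+c-2*b-1) = 0 by nia.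
have Hs2 : a+b+c = 0 \/ a+b+c = 1 by nia.
move: H12 H23 H13 => /eqP; rewrite mulf_eq0 !subr_eq0 => /orP[/eqP ?|/eqP ?];
  move=> /eqP; rewrite mulf_eq0 !subr_eq0 => /orP[/eqP ?|/eqP ?];
  move=> /eqP; rewrite mulf_eq0 !subr_eq0 => /orP[/eqP ?|/eqP ?];
  (have : (a = 0 /\ b = 0 /\ c = 0) \/ (a = 1 /\ b = 0 /\ c = 0) \/
          (a = 0 /\ b = 1 /\ c = 0) \/ (a = 0 /\ b = 0 /\ c = 1) by lia);
  by case=> [[?[??]]|[[?[??]]|[[?[??]]|[?[??]]]]]; [constructor 1|constructor 2|constructor 3|constructor 4].
Qed.

Definition e (i : 'I_3) : qring 'I_3 := [ffun k => (k == i)%:R].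

Lemma ordE (n : nat) (H : (n < 3)%N) : Ordinal H = inord n.
Proof. by apply/val_inj; rewrite /= inordK. Qed.

Lemma idem_class (v : qring 'I_3) : qring_mul r3op v v = v ->
  v = 0 \/ exists j, v = e j.
Proof.
case/idem_eqs => H1 H2 H3.
have vE : forall k : 'I_3, v k = if k == o0 then v o0 else if k == o1 then v o1 else v o2.
  by move=> k; ordcase k; congr (v _); apply/val_inj.
case: (@int_sys _ _ _ H1 H2 H3) => -[a b c]; [left|right; exists o0|right; exists o1|right; exists o2];
  apply/ffunP => k; rewrite vE a b c !ffunE; ordcase k.
Qed.

Lemma qmul_e (i : 'I_3) : qring_mul r3op (e i) (e i) = e i.
Proof.
apply/ffunP => k; rewrite ffunE !sum3 !ffunE.
ordcase i; ordcase k; rewrite -!(inj_eq val_inj) /= !r3opE /=.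
all: ring.
Qed.

Section Add.
Variable f : qring 'I_3 -> qring 'I_3.
Hypothesis fD : forall x y, f (x + y) = f x + f y.

Lemma f0 : f 0 = 0.
Proof. by apply/(addrI (f 0)); rewrite -fD !addr0. Qed.

Lemma fN y : f (- y) = - f y.
Proof. by apply/(addrI (f y)); rewrite -fD !subrr f0. Qed.

Lemma fMn y m : f (y *+ m) = f y *+ m.
Proof. by elim: m => [|m IH]; rewrite ?mulr0n ?f0 // !mulrS fD IH. Qed.

Lemma fMz y n : f (y *~ n) = f y *~ n.
Proof.
case: n => m; first by rewrite -!pmulrn fMn.
by rewrite NegzE !mulrNz fN -!pmulrn fMn.
Qed.

Lemma fsum (F : 'I_3 -> qring 'I_3) : f (\sum_i F i) = \sum_i f (F i).
Proof. exact: (big_morph f fD f0). Qed.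
End Add.

Lemma decomp (x : qring 'I_3) : x = \sum_i e i *~ x i.
Proof.
apply/ffunP => k; rewrite sum_ffunE sum3 !ffunMzE !ffunE.
ordcase k; rewrite -!(inj_eq val_inj) /=.
all: rewrite ?mul0rz ?mul1rz ?addr0 ?add0r.
all: rewrite intz; congr (x _); exact/val_inj.
Qed.

Lemma add_ext (f g : qring 'I_3 -> qring 'I_3) :
  (forall x y, f (x + y) = f x + f y) -> (forall x y, g (x + y) = g x + g y) ->
  (forall i, f (e i) = g (e i)) -> f =1 g.
Proof.
move=> fD gD fg x; rewrite (decomp x) (@fsum f fD) (@fsum g gD).
by apply: eq_bigr => i _; rewrite (@fMz f fD) (@fMz g gD) fg.
Qed.

Definition phi (s : {perm 'I_3}) (x : qring 'I_3) : qring 'I_3 :=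
  [ffun k => x (s^-1%g k)].

Lemma phiD s x y : phi s (x + y) = phi s x + phi s y.
Proof. by apply/ffunP => k; rewrite !ffunE. Qed.

Lemma phiM s x y : phi s (qring_mul r3op x y) = qring_mul r3op (phi s x) (phi s y).
Proof.
apply/ffunP => k; rewrite !ffunE [RHS](reindex_inj (@perm_inj _ s)).
apply: eq_bigr => i _; rewrite [RHS](reindex_inj (@perm_inj _ s)).
apply: eq_bigr => j _.
rewrite !ffunE !permK -perm_aut.
by rewrite (canF_eq (permK s)).
Qed.

Lemma phi_e s i : phi s (e i) = e (s i).
Proof. by apply/ffunP => k; rewrite !ffunE (canF_eq (permKV s)). Qed.

Theorem proposition6p3 :
  (exists phi : {perm 'I_3} -> qring 'I_3 -> qring 'I_3,
      [/\ forall s, qring_aut r3op (phi s),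
          forall s t, phi (s * t)%g =1 (phi t \o phi s),
          forall s t, phi s =1 phi t -> s = t &
          forall f, qring_aut r3op f -> exists s, f =1 phi s])
  /\ (quandle_aut r3op \isog [set: {perm 'I_3}])%g.
Proof.
split; last first.
  have -> : quandle_aut r3op = [set: {perm 'I_3}].
    apply/setP => s; rewrite inE in_setT.
    apply/forallP => i; apply/forallP => j; apply/eqP; exact: perm_aut.
  exact: isog_refl.
exists phi; split.
- move=> s; split.
  + exists (phi s^-1) => x; apply/ffunP => k; rewrite !ffunE invgK ?permK ?permKV //.
  + exact: phiD.
  + exact: phiM.
- by move=> s t x; apply/ffunP => k; rewrite /= !ffunE invMg permM.
- move=> s t H; apply/permP => i.
  have := H (e i); rewrite !phi_e => /(congr1 (fun w : qring 'I_3 => w (s i))).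
  by rewrite !ffunE eqxx; case: eqP.
- move=> f [fbij fD fM].
  have finj := bij_inj fbij.
  have H : forall i, exists j, f (e i) = e j.
    move=> i; have : qring_mul r3op (f (e i)) (f (e i)) = f (e i) by rewrite -fM qmul_e.
    case/idem_class => [h|//]; exfalso.
    have : e i = 0 by apply: finj; rewrite h (@f0 f fD).
    by move/(congr1 (fun w : qring 'I_3 => w i)); rewrite !ffunE eqxx.
  case: (fin_all_exists H) => g Hg.
  have ginj : injective g.
    move=> i j gij; have : e i = e j by apply: finj; rewrite !Hg gij.
    by move/(congr1 (fun w : qring 'I_3 => w i)); rewrite !ffunE eqxx; case: eqP.
  exists (perm ginj); apply: add_ext => //; first exact: phiD.
  by move=> i; rewrite phi_e permE Hg.
Qed.
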